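(* Let $\mathcal{G}$ be a weakly reversible reaction network under stochastic mass-action kinetics whose irreducible components are $\Gamma_l=\{x\in\mathbb{Z}^{\mathcal{S}}_{\ge0}\mid\sum_ix_i=l\}$ for $l\in\mathcal{I}=\mathbb{Z}_{\ge m}$. Let $V_{>0}(M_{\mathcal{G}})\subseteq\mathbb{R}^{\mathcal{R}}_{>0}$ be the set of positive rate vectors $\kappa$ for which $(\mathcal{G},\kappa)$ is complex balanced, and let $V_{\mathcal{G},>0}=\mathbb{V}(I)\cap\mathbb{R}^{\mathcal{R}}_{>0}$. Then $\emptyset\neq V_{>0}(M_{\mathcal{G}})\subseteq V_{\mathcal{G},>0}$. Furthermore, if the deficiency of $\mathcal{G}$ is zero, then $V_{>0}(M_{\mathcal{G}})=V_{\mathcal{G},>0}=\mathbb{R}^{\mathcal{R}}_{>0}$.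
   Context: Reaction network $\mathcal{G}=(\mathcal{S},\mathcal{C},\mathcal{R})$, species $S_1,\dots,S_n$, complexes $\nu\in\mathbb{Z}^n_{\ge0}$. Weakly reversible: for every reaction $\nu\to\nu'$ there is a directed path in the reaction graph from $\nu'$ to $\nu$. Deficiency: $|\mathcal{C}|-\ell-\dim\mathcal{T}$ with $\ell$ the number of connected components of the reaction graph and $\mathcal{T}=\mathrm{span}\{\nu'-\nu:\nu\to\nu'\in\mathcal{R}\}$. Stochastic mass-action intensity: $\lambda_{\nu\to\nu'}(x)=\kappa_{\nu\to\nu'}\frac{x!}{(x-\nu)!}\mathbf{1}_{x\ge\nu}$ with $z!=\prod_iz_i!$. $(\mathcal{G},\kappa)$ is complex balanced if there is $c\in\mathbb{R}^n_{>0}$ such that for every complex $\eta$, $\sum_{\nu\to\eta}\kappa_{\nu\to\eta}c^{\nu}=\sum_{\eta\to\nu'}\kappa_{\eta\to\nu'}c^{\eta}$, where $c^\nu=\prod_ic_i^{\nu_i}$. For each $l\in\mathcal{I}$ let $h_l(\kappa)=(h_{l,x}(\kappa))_{x\in\Gamma_l}$ be a vector of polynomials in $\kappa$ such that for all $\kappa>0$ the stationary distribution on $\Gamma_l$ is $h_l(\kappa)$ normalized. $I\subset\mathbb{R}[\kappa]$ is the ideal generated by the polynomials obtained by substituting $\pi_i(x)\mapsto h_{i,x}(\kappa)$ in the differences of both sides of: (a) $\pi_i(x+e_j-e_k)\pi_{i+1}(y)=\pi_{i+1}(y+e_j-e_k)\pi_i(x)$ for $i,i+1\in\mathcal{I}$,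 $x,x+e_j-e_k\in\Gamma_i$, $y,y+e_j-e_k\in\Gamma_{i+1}$, $x_j=y_j,x_k=y_k$; (b) $\pi_{i+1}(x+e_j)\pi_{i+1}(y)\pi_{i+2}(w+e_k)\pi_i(z)=\pi_{i+1}(z+e_k)\pi_{i+1}(w)\pi_{i+2}(y+e_j)\pi_i(x)$ for $i,i+1,i+2\in\mathcal{I}$, $x,z\in\Gamma_i$, $x+e_j,y,z+e_k,w\in\Gamma_{i+1}$, $y+e_j,w+e_k\in\Gamma_{i+2}$, $x_j=y_j$, $z_k=w_k$. $\mathbb{V}(I)$ is its real zero set in $\mathbb{R}^{\mathcal{R}}$. *)

(* Defs.v *)
From HB Require Import structures.
From mathcomp Require Import all_boot all_order all_algebra.
From mathcomp Require Import reals.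
From mathcomp Require Import mpoly.
From Stdlib Require Import Relations.

Set Implicit Arguments.
Unset Strict Implicit.
Unset Printing Implicit Defensive.

Import Order.TTheory GRing.Theory Num.Theory.
Local Open Scope ring_scope.

Definition state (n : nat) := {ffun 'I_n -> nat}.

Record crn (n : nat) := CRN {
  ncpx : nat;
  nrxn : nat;
  cpx : 'I_ncpx -> state n;
  src : 'I_nrxn -> 'I_ncpx;
  tgt : 'I_nrxn -> 'I_ncpx;
  cpx_inj : injective cpx;
  cpx_used : forall c, exists k, src k = c \/ tgt k = c;
  rxn_nontriv : forall k, src k <> tgt k;
  rxn_inj : injective (fun k => (src k, tgt k))
}.

Arguments ncpx {n} c : rename.
Arguments nrxn {n} c : rename.
Arguments cpx {n} c _ : rename.
Arguments src {n} c _ : rename.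
Arguments tgt {n} c _ : rename.

Section Network.
Variables (n : nat) (G : crn n).

Definition rgraph_edge : rel 'I_(ncpx G) :=
  fun a b => [exists k, (src G k == a) && (tgt G k == b)].

Definition rgraph_uedge : rel 'I_(ncpx G) :=
  fun a b => rgraph_edge a b || rgraph_edge b a.

Definition weakly_reversible : Prop :=
  forall k, connect rgraph_edge (tgt G k) (src G k).

Definition n_linkage : nat := n_comp (connect rgraph_uedge) predT.

Definition stoich_dim (R : fieldType) : nat :=
  \rank (\matrix_(k < nrxn G, i < n)
          ((cpx G (tgt G k) i)%:R - (cpx G (src G k) i)%:R : R)).

Definition deficiency (R : fieldType) : int :=
  (ncpx G)%:Z - (n_linkage)%:Z - (stoich_dim R)%:Z.

Definition srcv k : state n := cpx G (src G k).
Definition tgtv k : state n := cpx G (tgt G k).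

Definition intensity (R : realType) (kappa : 'I_(nrxn G) -> R) k (x : state n)
  : R :=
  kappa k * (if [forall i, (srcv k i <= x i)%N]
             then \prod_(i < n) (((x i)`!)%:R / ((x i - srcv k i)`!)%:R)
             else 0).

(* one-step transition of the Markov chain (for positive rates):
   reaction k can fire at x (x >= nu_k) and leads to y = x - nu_k + nu'_k *)
Definition step (x y : state n) : Prop :=
  exists k, (forall i, (srcv k i <= x i)%N) /\
            (forall i, (y i + srcv k i = x i + tgtv k i)%N).

Definition reach : relation (state n) := clos_refl_trans _ step.

Definition irreducible_component (Gam : state n -> Prop) : Prop :=
  (exists x, Gam x) /\ forall x, Gam x -> forall y, reach x y <-> Gam y.

Definition Gamma (l : nat) (x : state n) : bool := \sum_(i < n) x i == l.

Definition box_state (l : nat) (f : {ffun 'I_n -> 'I_l.+1}) : state n :=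
  [ffun i => val (f i)].
Definition sum_Gamma (R : realType) (l : nat) (F : state n -> R) : R :=
  \sum_(f : {ffun 'I_n -> 'I_l.+1} | Gamma l (box_state f)) F (box_state f).

(* predecessor state x - nu'_k + nu_k (used only when nu'_k <= x) *)
Definition pre_state k (x : state n) : state n :=
  [ffun i => (x i - tgtv k i + srcv k i)%N].

Definition stationary_on (R : realType) (kappa : 'I_(nrxn G) -> R) (l : nat)
    (pi : state n -> R) : Prop :=
  [/\ forall x, ~~ Gamma l x -> pi x = 0,
      forall x, 0 <= pi x,
      sum_Gamma l pi = 1 &
      forall x, Gamma l x ->
        \sum_(k < nrxn G | [forall i, (tgtv k i <= x i)%N])
           intensity kappa k (pre_state k x) * pi (pre_state k x)
        = pi x * \sum_(k < nrxn G) intensity kappa k x].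

Definition positive (R : realType) (kappa : 'I_(nrxn G) -> R) : Prop :=
  forall k, 0 < kappa k.

Definition monom (R : realType) (c : 'I_n -> R) (nu : state n) : R :=
  \prod_(i < n) c i ^+ nu i.

Definition complex_balanced (R : realType) (kappa : 'I_(nrxn G) -> R) : Prop :=
  exists c : 'I_n -> R, (forall i, 0 < c i) /\
    forall eta : 'I_(ncpx G),
      \sum_(k < nrxn G | tgt G k == eta) kappa k * monom c (srcv k)
      = \sum_(k < nrxn G | src G k == eta) kappa k * monom c (cpx G eta).

Definition V_cb_pos (R : realType) (kappa : 'I_(nrxn G) -> R) : Prop :=
  positive kappa /\ complex_balanced kappa.

Definition add_e (x : state n) (j : 'I_n) : state n := [ffun i => (x i + (i == j))%N].

(* Generators of the ideal I, given the polynomial vectors h (h l x = h_{l,x}),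
   for the index set I = Z_{>= m}.  [x' = x + e_j - e_k] is expressed
   exactly (without truncated subtraction) as  x' + e_k = x + e_j. *)
Definition ideal_gen (R : realType) (m : nat)
    (h : nat -> state n -> {mpoly R[nrxn G]}) (p : {mpoly R[nrxn G]}) : Prop :=
  (exists (i : nat) (j k : 'I_n) (x x' y y' : state n),
     [/\ (m <= i)%N,
         add_e x' k = add_e x j /\ add_e y' k = add_e y j,
         [/\ Gamma i x, Gamma i x', Gamma i.+1 y & Gamma i.+1 y'],
         x j = y j /\ x k = y k &
         p = h i x' * h i.+1 y - h i.+1 y' * h i x])
  \/
  (exists (i : nat) (j k : 'I_n) (x y z w : state n),
     [/\ (m <= i)%N,
         [/\ Gamma i x, Gamma i z, Gamma i.+1 (add_e x j), Gamma i.+1 y &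
             Gamma i.+1 (add_e z k) /\ Gamma i.+1 w],
         Gamma i.+2 (add_e y j) /\ Gamma i.+2 (add_e w k),
         x j = y j /\ z k = w k &
         p = h i.+1 (add_e x j) * h i.+1 y * h i.+2 (add_e w k) * h i z
           - h i.+1 (add_e z k) * h i.+1 w * h i.+2 (add_e y j) * h i x]).

Definition in_ideal (R : realType) (m : nat)
    (h : nat -> state n -> {mpoly R[nrxn G]}) (p : {mpoly R[nrxn G]}) : Prop :=
  exists s : seq ({mpoly R[nrxn G]} * {mpoly R[nrxn G]}),
    (forall t, t \in s -> ideal_gen m h t.2) /\
    p = \sum_(t <- s) t.1 * t.2.

Definition V_ideal (R : realType) (m : nat)
    (h : nat -> state n -> {mpoly R[nrxn G]}) (kappa : 'I_(nrxn G) -> R) : Prop :=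
  forall p, in_ideal m h p -> p.@[kappa] = 0.

Definition V_G_pos (R : realType) (m : nat)
    (h : nat -> state n -> {mpoly R[nrxn G]}) (kappa : 'I_(nrxn G) -> R) : Prop :=
  V_ideal m h kappa /\ positive kappa.

End Network.

(* Main.v *)
Require Import Defs.
From HB Require Import structures.
From mathcomp Require Import all_boot all_order all_algebra.
From mathcomp Require Import reals.
From mathcomp Require Import mpoly.
From mathcomp Require Import sequences exp.
From mathcomp Require Import zify.
From mathcomp.algebra_tactics Require Import ring lra.
From Stdlib Require Import Relations.

Set Implicit Arguments.
Unset Strict Implicit.
Unset Printing Implicit Defensive.

Import Order.TTheory GRing.Theory Num.Theory.
Local Open Scope ring_scope.

Ltac glia :=
  intros;
  repeat match goal with H : context[@fun_of_fin ?A ?B ?f ?i] |- _ => revert H end;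
  repeat match goal with |- context[@fun_of_fin ?A ?B ?f ?i] =>
    let v := fresh "v" in move: (@fun_of_fin A B f i) => v end;
  lia.
Section PF.
Variables (R : realType) (n : nat) (G : crn n).

Definition phi (a : R) (e : nat) : R := a ^+ e / (e`!)%:R.
Definition wf (c : 'I_n -> R) (x : state n) : R := \prod_i phi (c i) (x i).
Definition pf (c : 'I_n -> R) l (x : state n) : R := if Gamma l x then wf c x else 0.

Lemma fact_neq0 (e : nat) : (e`!)%:R != 0 :> R.
Proof. by rewrite pnatr_eq0 -lt0n fact_gt0. Qed.

Lemma phi_gt0 a e : 0 < a -> 0 < phi a e.
Proof. by move=> a0; rewrite /phi divr_gt0 // ?exprn_gt0 // ltr0n fact_gt0. Qed.

Lemma wf_gt0 c x : (forall i, 0 < c i) -> 0 < wf c x.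
Proof. by move=> c0; rewrite /wf; apply: prodr_gt0 => i _; exact: phi_gt0. Qed.

Lemma key_id (a : R) (x b : nat) :
  ((x + b)`!)%:R / (x`!)%:R * phi a (x + b) = a ^+ b * phi a x.
Proof.
rewrite /phi exprD. have h1 := fact_neq0 (x + b). have h2 := fact_neq0 x.
field. by rewrite h1 h2.
Qed.

Lemma key_id2 (a : R) (x b : nat) : (b <= x)%N ->
  (x`!)%:R / ((x - b)`!)%:R * phi a x = a ^+ b * phi a (x - b).
Proof. by move=> H; have := key_id a (x - b) b; rewrite subnK. Qed.

Definition mass_cons := forall k, (\sum_i srcv (G:=G) k i = \sum_i tgtv (G:=G) k i)%N.

Lemma mass_consP m :
  (forall l, (m <= l)%N -> irreducible_component G (fun x => Gamma l x)) -> mass_cons.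
Proof.
move=> Hirr k.
case: (pickP (fun _ : 'I_n => true)) => [i0 _|none]; last first.
  by rewrite !big1 // => i; have := none i.
pose l := (m + \sum_i srcv k i)%N.
have [_ H] := Hirr l (leq_addr _ _).
pose x : state n := [ffun i => (srcv k i + (if i == i0 then m else 0))%N].
pose y : state n := [ffun i => (tgtv k i + (if i == i0 then m else 0))%N].
have sumE (f : 'I_n -> nat) :
    (\sum_i (f i + (if i == i0 then m else 0)) = \sum_i f i + m)%N.
  rewrite big_split /=; congr (_ + _)%N.
  rewrite (bigD1 i0) //= eqxx big1 ?addn0 // => i /negPf ->.
  by [].
have Gx : Gamma l x.
  rewrite /Gamma (eq_bigr (fun i => srcv k i + (if i == i0 then m else 0))%N).
    by rewrite sumE addnC.
  by move=> i _; rewrite /x ffunE.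
have : Gamma l y.
  apply/(H x Gx y)/rt_step; exists k; split => i; rewrite /x /y !ffunE; lia.
rewrite /Gamma (eq_bigr (fun i => tgtv k i + (if i == i0 then m else 0))%N); last first.
  by move=> i _; rewrite /y ffunE.
rewrite sumE addnC /l => /eqP; lia.
Qed.

Variable kappa : 'I_(nrxn G) -> R.
Hypothesis kpos : positive kappa.

Lemma int_ge0 k (x : state n) : 0 <= intensity kappa k x.
Proof.
rewrite /intensity; apply: mulr_ge0; first exact: ltW.
case: ifP => // _; apply: prodr_ge0 => i _; apply: divr_ge0; exact: ler0n.
Qed.

Lemma int_gt0 k (x : state n) : (forall i, srcv k i <= x i)%N -> 0 < intensity kappa k x.
Proof.
move=> H; rewrite /intensity; apply: mulr_gt0; first exact: kpos.
have -> : [forall i, (srcv k i <= x i)%N] by apply/forallP.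
apply: prodr_gt0 => i _; apply: divr_gt0; by rewrite ltr0n fact_gt0.
Qed.

Definition Phi (c : 'I_n -> R) (x z : state n) : R :=
  if [forall i, (z i <= x i)%N] then \prod_i phi (c i) (x i - z i) else 0.

Lemma ack c l (x : state n) : (forall i, 0 < c i) ->
  (forall eta : 'I_(ncpx G),
      \sum_(k < nrxn G | tgt G k == eta) kappa k * monom c (srcv k)
      = \sum_(k < nrxn G | src G k == eta) kappa k * monom c (cpx G eta)) ->
  mass_cons -> Gamma l x ->
  \sum_(k < nrxn G | [forall i, (tgtv k i <= x i)%N])
     intensity kappa k (pre_state k x) * pf c l (pre_state k x)
  = pf c l x * \sum_(k < nrxn G) intensity kappa k x.
Proof.
move=> cpos cb mc Gx.
have L1 k : [forall i, (tgtv k i <= x i)%N] ->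
    intensity kappa k (pre_state k x) * pf c l (pre_state k x)
    = kappa k * monom c (srcv k) * Phi c x (tgtv k).
  move=> Hk; have Hk' := forallP Hk.
  have Gp : Gamma l (pre_state k x).
    rewrite /Gamma -(eqP Gx).
    under eq_bigr do rewrite ffunE.
    apply/eqP; apply: (@addIn (\sum_i tgtv k i)%N).
    rewrite -{2}(mc k) -!big_split /=; apply: eq_bigr => i _.
    have := Hk' i; lia.
  rewrite /pf Gp /intensity /Phi Hk.
  have -> : [forall i, (srcv k i <= pre_state k x i)%N].
    by apply/forallP => i; rewrite ffunE leq_addl.
  rewrite -!mulrA; congr (_ * _).
  rewrite /wf /monom -!big_split /=; apply: eq_bigr => i _.
  rewrite ffunE addnK; exact: key_id.
have L2 k : intensity kappa k x * wf c x
    = kappa k * monom c (srcv k) * Phi c x (srcv k).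
  rewrite /intensity /Phi; case: ifP => Hk; last by rewrite !mulr0 mul0r.
  have Hk' := forallP Hk.
  rewrite -!mulrA; congr (_ * _).
  rewrite /wf /monom -!big_split /=; apply: eq_bigr => i _.
  exact: key_id2.
have PhiT : forall k, Phi c x (cpx G (tgt G k)) * (kappa k * monom c (srcv k)) = 
    (if [forall i, (tgtv k i <= x i)%N] then intensity kappa k (pre_state k x) * pf c l (pre_state k x) else 0).
  move=> k; case: ifP => Hk; first by rewrite L1 // mulrC.
  by rewrite /Phi /tgtv Hk mul0r.
rewrite big_mkcond /=.
under eq_bigr do rewrite -PhiT.
rewrite /pf Gx mulr_sumr.
under [RHS]eq_bigr do rewrite mulrC L2 mulrC.
rewrite (partition_big (tgt G) predT) //= [RHS](partition_big (src G) predT) //=.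
apply: eq_bigr => eta _.
transitivity (Phi c x (cpx G eta) * \sum_(k | tgt G k == eta) kappa k * monom c (srcv k)).
  rewrite mulr_sumr; apply: eq_bigr => k /eqP <-; by [].
rewrite cb mulr_sumr; apply: eq_bigr => k /eqP <-; by [].
Qed.

End PF.
Section Ratio.
Variables (R : realType) (n : nat) (G : crn n).
Variable kappa : 'I_(nrxn G) -> R.
Hypothesis kpos : positive kappa.

Definition boxof l (x : state n) : {ffun 'I_n -> 'I_l.+1} := [ffun i => inord (x i)].

Lemma boxofK l (x : state n) : Gamma l x -> box_state (boxof l x) = x.
Proof.
move=> Gx; apply/ffunP => i; rewrite /box_state /boxof !ffunE /= inordK // ltnS -(eqP Gx).
by rewrite (bigD1 i) //= leq_addr.
Qed.

Lemma ratio_const l (pi p : state n -> R) :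
  irreducible_component G (fun x => Gamma l x) ->
  (forall x, ~~ Gamma l x -> pi x = 0) ->
  (forall x, Gamma l x ->
        \sum_(k < nrxn G | [forall i, (tgtv k i <= x i)%N])
           intensity kappa k (pre_state k x) * pi (pre_state k x)
        = pi x * \sum_(k < nrxn G) intensity kappa k x) ->
  (forall x, ~~ Gamma l x -> p x = 0) ->
  (forall x, Gamma l x -> 0 < p x) ->
  (forall x, Gamma l x ->
        \sum_(k < nrxn G | [forall i, (tgtv k i <= x i)%N])
           intensity kappa k (pre_state k x) * p (pre_state k x)
        = p x * \sum_(k < nrxn G) intensity kappa k x) ->
  exists r0, forall x, Gamma l x -> pi x = r0 * p x.
Proof.
move=> [[x0 Gx0] Hirr] pi0 pibal p0 ppos pbal.
pose r x := pi x / p x.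
have hpr x : pi x = r x * p x.
  case: (boolP (Gamma l x)) => Gx.
    by rewrite /r divfK // gt_eqF // ppos.
  by rewrite pi0 // p0 // mulr0.
have pge0 x : 0 <= p x.
  by case: (boolP (Gamma l x)) => Gx; [exact/ltW/ppos | rewrite p0].
have Hf0 : Gamma l (box_state (boxof l x0)) by rewrite boxofK.
case: (@arg_maxP _ R _ (boxof l x0) (fun f => Gamma l (box_state f))
         (fun f => r (box_state f)) Hf0) => fm Gm Hmax.
set ym := box_state fm in Gm Hmax.
have hle x : Gamma l x -> r x <= r ym.
  by move=> Gx; have := Hmax (boxof l x); rewrite boxofK //; apply.
have key z : Gamma l z -> r z = r ym -> forall k : 'I_(nrxn G),
    [forall i, (tgtv k i <= z i)%N] -> Gamma l (pre_state k z) ->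
    r (pre_state k z) = r ym.
  move=> Gz rz k Sk Gp.
  pose T k := intensity kappa k (pre_state k z) * p (pre_state k z)
              * (r ym - r (pre_state k z)).
  have T0 : \sum_(k | [forall i, (tgtv k i <= z i)%N]) T k = 0.
    have -> : \sum_(k | [forall i, (tgtv k i <= z i)%N]) T k =
      r ym * \sum_(k | [forall i, (tgtv k i <= z i)%N])
               intensity kappa k (pre_state k z) * p (pre_state k z)
      - \sum_(k | [forall i, (tgtv k i <= z i)%N])
               intensity kappa k (pre_state k z) * pi (pre_state k z).
      rewrite mulr_sumr -sumrB; apply: eq_bigr => j _; rewrite /T hpr; ring.
    rewrite pibal // pbal // -rz hpr; ring.
  have Tge0 j : [forall i, (tgtv j i <= z i)%N] -> 0 <= T j.
    move=> _; rewrite /T; case: (boolP (Gamma l (pre_state j z))) => Gj.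
      apply: mulr_ge0; first by apply: mulr_ge0; [exact: int_ge0 | exact: pge0].
      by rewrite subr_ge0 hle.
    by rewrite p0 // mulr0 mul0r.
  have := @psumr_eq0P _ _ (fun j => [forall i, (tgtv j i <= z i)%N]) T Tge0 T0 k Sk.
  have hint : 0 < intensity kappa k (pre_state k z).
    by apply: (int_gt0 kpos) => i; rewrite ffunE leq_addl.
  have pp := ppos _ Gp.
  rewrite /T => /eqP; rewrite -mulrA mulf_eq0 (gt_eqF hint) /= mulf_eq0 (gt_eqF pp) /=.
  by rewrite subr_eq0 => /eqP <-.
have back a b : reach G a b -> Gamma l a -> Gamma l b -> r b = r ym -> r a = r ym.
  elim => {a b} [a b [k [H1 H2]]|a|a b c Hab IHab Hbc IHbc] Ga Gb rb //.
    have Sk : [forall i, (tgtv k i <= b i)%N].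
      by apply/forallP => i; have := H1 i; have := H2 i; lia.
    have pa : pre_state k b = a.
      apply/ffunP => i; rewrite ffunE; have := H1 i; have := H2 i.
      move: (b i) (a i) (srcv k i) (tgtv k i) => B A S T; lia.
    by rewrite -pa; apply: key => //; rewrite pa.
  have Gb' : Gamma l b by apply/(Hirr a Ga b).
  by apply: IHab => //; apply: IHbc.
exists (r ym) => x Gx; rewrite hpr (back x ym) //.
by apply/(Hirr x Gx ym).
Qed.

End Ratio.
Section Gens.
Variables (R : realType) (n : nat) (G : crn n).

Lemma h_prod m (h : nat -> state n -> {mpoly R[nrxn G]}) :
  (forall l, (m <= l)%N -> irreducible_component G (fun x => Gamma l x)) ->
  (forall kappa : 'I_(nrxn G) -> R, positive kappa ->
     forall l, (m <= l)%N ->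
       stationary_on kappa l
         (fun x => (h l x).@[kappa] / sum_Gamma l (fun y => (h l y).@[kappa]))) ->
  forall kappa, V_cb_pos kappa ->
  exists c : 'I_n -> R, (forall i, 0 < c i) /\
  forall l, (m <= l)%N ->
  exists C, forall x, Gamma l x -> (h l x).@[kappa] = C * wf c x.
Proof.
move=> Hirr Hst kappa [kpos [c [cpos cb]]]; exists c; split => // l ml.
have mc := mass_consP Hirr.
have [H0 Hge Hsum Hbal] := Hst kappa kpos l ml.
set Z := sum_Gamma l _ in H0 Hge Hsum Hbal.
have p0 : forall x, ~~ Gamma l x -> pf c l x = 0.
  by move=> x Gx; rewrite /pf (negPf Gx).
have ppos : forall x, Gamma l x -> 0 < pf c l x.
  by move=> x Gx; rewrite /pf Gx; exact: wf_gt0.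
have pbal := fun (x : state n) (Gx : Gamma l x) => ack (kappa:=kappa) cpos cb mc Gx.
have [r0 Hr] := ratio_const kpos (Hirr l ml) H0 Hbal p0 ppos pbal.
have Z0 : Z != 0.
  apply/negP => /eqP Z0; move: Hsum; rewrite Z0 /sum_Gamma big1 ?(@oner_eq0 R) //.
    by move=> /esym/eqP; rewrite oner_eq0.
  by move=> f _; rewrite invr0 mulr0.
exists (Z * r0) => x Gx.
have := Hr x Gx; rewrite /pf Gx => e.
by rewrite -mulrA -e mulrC divfK.
Qed.

Lemma wf_a (c : 'I_n -> R) (x x' y y' : state n) j k :
  add_e x' k = add_e x j -> add_e y' k = add_e y j -> x j = y j -> x k = y k ->
  wf c x' * wf c y = wf c y' * wf c x.
Proof.
move=> E1 E2 ej ek; rewrite /wf -!big_split /=; apply: eq_bigr => t _.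
have e1 := congr1 (fun f : state n => f t) E1; have e2 := congr1 (fun f : state n => f t) E2.
rewrite /add_e !ffunE /= in e1 e2.
have : (x' t = x t /\ y' t = y t) \/ (x' t = y' t /\ x t = y t).
  case: (eqVneq t j) => [tj|tj]; case: (eqVneq t k) => [tk|tk].
  - subst t; subst k; rewrite eqxx in e1 e2; left; glia.
  - subst t; rewrite eqxx (negPf tk) in e1 e2; right; rewrite ej in e1 *; glia.
  - subst t; rewrite eqxx (negPf tj) in e1 e2; right; rewrite ek in e1 *; glia.
  - rewrite (negPf tj) (negPf tk) in e1 e2; left; glia.
by case=> [[-> ->]|[-> ->]]; rewrite // mulrC.
Qed.

Lemma wf_b (c : 'I_n -> R) (x y z w : state n) j k :
  x j = y j -> z k = w k ->
  wf c (add_e x j) * wf c y * wf c (add_e w k) * wf c z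
  = wf c (add_e z k) * wf c w * wf c (add_e y j) * wf c x.
Proof.
move=> ej ek; rewrite /wf -!big_split /=; apply: eq_bigr => t _.
rewrite /add_e !ffunE.
case: (eqVneq t j) => [tj|tj]; case: (eqVneq t k) => [tk|tk].
- subst t; subst k; rewrite ej ek; ring.
- subst t; rewrite ?(negPf tk) ej /= !addn0; ring.
- subst t; rewrite ?(negPf tj) ek /= !addn0; ring.
- rewrite ?(negPf tj) ?(negPf tk) /= !addn0; ring.
Qed.

Lemma gens_vanish m (h : nat -> state n -> {mpoly R[nrxn G]}) kappa (c : 'I_n -> R) :
  (forall l, (m <= l)%N ->
     exists C, forall x, Gamma l x -> (h l x).@[kappa] = C * wf c x) ->
  forall p, ideal_gen m h p -> p.@[kappa] = 0.
Proof.
move=> HC p [[i [j [k [x [x' [y [y' [mi [E1 E2] [Gx Gx' Gy Gy'] [ej ek] ->]]]]]]]]|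
             [i [j [k [x [y [z [w [mi [Gx Gz Gxj Gy [Gzk Gw]] [Gyj Gwk] [ej ek] ->]]]]]]]]].
- have [C0 H0] := HC i mi; have [C1 H1] := HC i.+1 (leq_trans mi (leqnSn _)).
  rewrite mevalB !mevalM H0 // H1 // H1 // H0 //.
  have e := wf_a c E1 E2 ej ek.
  apply/eqP; rewrite subr_eq0; apply/eqP.
  have -> : C0 * wf c x' * (C1 * wf c y) = C0 * C1 * (wf c x' * wf c y) by ring.
  rewrite e; ring.
- have [C0 H0] := HC i mi; have [C1 H1] := HC i.+1 (leq_trans mi (leqnSn _)).
  have [C2 H2] := HC i.+2 (leq_trans mi (leq_trans (leqnSn _) (leqnSn _))).
  rewrite mevalB !mevalM H0 // H0 // H1 // H1 // H1 // H1 // H2 // H2 //.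
  have e := wf_b c ej ek.
  apply/eqP; rewrite subr_eq0; apply/eqP.
  have -> : C1 * wf c (add_e x j) * (C1 * wf c y) * (C2 * wf c (add_e w k)) * (C0 * wf c z)
    = C1 * C1 * C2 * C0 * (wf c (add_e x j) * wf c y * wf c (add_e w k) * wf c z) by ring.
  rewrite e; ring.
Qed.

Lemma ideal_vanish m (h : nat -> state n -> {mpoly R[nrxn G]}) kappa :
  (forall p, ideal_gen m h p -> p.@[kappa] = 0) -> V_ideal m h kappa.
Proof.
move=> Hg p [s [Hs ->]]; elim: s Hs => [|t s IH] Hs; first by rewrite big_nil meval0.
rewrite big_cons mevalD mevalM.
have -> : t.2.@[kappa] = 0 by apply: Hg; apply: Hs; rewrite inE eqxx.
rewrite mulr0 add0r; apply: IH => u us; apply: Hs; by rewrite inE us orbT.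
Qed.

End Gens.
Section Kern.
Variables (R : realType) (n : nat) (G : crn n).
Variable kappa : 'I_(nrxn G) -> R.
Hypothesis kpos : positive kappa.
Local Notation C := (ncpx G).

Definition inflow (v : 'I_C -> R) (eta : 'I_C) :=
  \sum_(k | tgt G k == eta) kappa k * v (src G k).
Definition outr (eta : 'I_C) := \sum_(k | src G k == eta) kappa k.
Definition balanced (v : 'I_C -> R) := forall eta, inflow v eta = v eta * outr eta.

Lemma outr_ge0 eta : 0 <= outr eta.
Proof. by apply: sumr_ge0 => k _; apply: ltW. Qed.

Lemma usym : ssrbool.symmetric (rgraph_uedge (G:=G)).
Proof. by move=> a b; rewrite /rgraph_uedge orbC. Qed.

Lemma csym : connect_sym (rgraph_uedge (G:=G)).
Proof. exact: sym_connect_sym usym. Qed.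

Lemma cls_edge a k :
  connect (rgraph_uedge (G:=G)) a (src G k) = connect (rgraph_uedge (G:=G)) a (tgt G k).
Proof.
have e : connect (rgraph_uedge (G:=G)) (src G k) (tgt G k).
  apply: connect1; rewrite /rgraph_uedge; apply/orP; left.
  by apply/existsP; exists k; rewrite !eqxx.
apply/idP/idP => H; first exact: connect_trans H e.
by apply: connect_trans H _; rewrite csym.
Qed.

Lemma wr_conn : weakly_reversible G -> forall a b,
  connect (rgraph_uedge (G:=G)) a b -> connect (rgraph_edge (G:=G)) a b.
Proof.
move=> wr; apply: connect_sub => x y /orP[e|e]; first exact: connect1.
move/existsP: e => [k /andP[/eqP s /eqP t]]; rewrite -s -t; exact: wr.
Qed.

Lemma sum_delta (eta : 'I_C) (f : 'I_C -> R) :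
  \sum_zeta (eta == zeta)%:R * f zeta = f eta.
Proof.
rewrite (bigD1 eta) //= eqxx mul1r big1 ?addr0 // => z; rewrite eq_sym => /negPf ->.
by rewrite mul0r.
Qed.

Lemma sum_delta' (eta : 'I_C) (f : 'I_C -> R) :
  \sum_zeta (zeta == eta)%:R * f zeta = f eta.
Proof.
rewrite (bigD1 eta) //= eqxx mul1r big1 ?addr0 // => z /negPf ->.
by rewrite mul0r.
Qed.

Lemma bal_add v1 v2 : balanced v1 -> balanced v2 -> balanced (fun x => v1 x + v2 x).
Proof.
move=> b1 b2 eta; rewrite /inflow.
under eq_bigr do rewrite mulrDr.
by rewrite big_split /= -/(inflow v1 eta) -/(inflow v2 eta) b1 b2 mulrDl.
Qed.

Lemma bal_abs v : balanced v -> balanced (fun x => `|v x|).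
Proof.
move=> bv.
have le eta : `|v eta| * outr eta <= inflow (fun x => `|v x|) eta.
  rewrite -(ger0_norm (outr_ge0 eta)) -normrM -bv /inflow.
  apply: le_trans (ler_norm_sum _ _ _) _.
  by apply: ler_sum => k _; rewrite normrM (gtr0_norm (kpos k)).
have S1 : \sum_eta inflow (fun x => `|v x|) eta = \sum_k kappa k * `|v (src G k)|.
  by rewrite [RHS](partition_big (tgt G) predT) //=.
have S2 : \sum_eta `|v eta| * outr eta = \sum_k kappa k * `|v (src G k)|.
  rewrite [RHS](partition_big (src G) predT) //=; apply: eq_bigr => eta _.
  rewrite /outr mulr_sumr; apply: eq_bigr => k /eqP <-; exact: mulrC.
have D0 : \sum_eta (inflow (fun x => `|v x|) eta - `|v eta| * outr eta) = 0.
  by rewrite sumrB S1 S2 subrr.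
move=> eta; apply/eqP; rewrite -subr_eq0; apply/eqP.
have H0 i : true -> 0 <= inflow (fun x => `|v x|) i - `|v i| * outr i by rewrite subr_ge0.
exact: (@psumr_eq0P _ _ xpredT _ H0 D0 eta).
Qed.

Lemma bal_prop b : balanced b -> (forall x, 0 <= b x) ->
  forall x y, rgraph_edge (G:=G) x y -> 0 < b x -> 0 < b y.
Proof.
move=> bb b0 x y /existsP[k /andP[/eqP sk /eqP tk]] bx.
have H : 0 < inflow b y.
  rewrite /inflow (bigD1 k) ?tk //=.
  apply: (lt_le_trans (y := kappa k * b (src G k))); first by rewrite sk mulr_gt0.
  rewrite lerDl; apply: sumr_ge0 => j _; apply: mulr_ge0; [exact: ltW|exact: b0].
rewrite lt0r b0 andbT; apply/negP => /eqP e.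
by move: H; rewrite bb e mul0r ltxx.
Qed.

Lemma bal_path b : balanced b -> (forall x, 0 <= b x) ->
  forall x y, connect (rgraph_edge (G:=G)) x y -> 0 < b x -> 0 < b y.
Proof.
move=> bb b0 x y /connectP[p pth ->]; elim: p x pth => [|z p IH] x //= /andP[exz pth] bx.
by apply: IH pth _; exact: bal_prop bb b0 _ _ exz bx.
Qed.

Lemma per_class : weakly_reversible G -> forall a : 'I_C,
  exists v, balanced v /\ (forall x, 0 <= v x) /\ 0 < v a.
Proof.
move=> wr a.
pose cls eta := connect (rgraph_uedge (G:=G)) a eta.
have clsE k : cls (src G k) = cls (tgt G k) := cls_edge a k.
pose A (eta zeta : 'I_C) := \sum_(k | (src G k == eta) && (tgt G k == zeta)) kappa k.
pose X eta := if cls eta then outr eta else 1.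
pose M : 'M[R]_C := \matrix_(eta, zeta) ((cls eta)%:R * A eta zeta - (eta == zeta)%:R * X eta).
pose u : 'cV[R]_C := \col_eta (cls eta)%:R.
have Mu : M *m u = 0.
  apply/matrixP => eta i; rewrite !mxE.
  under eq_bigr do rewrite !mxE mulrBl.
  rewrite sumrB.
  under [X in _ - X]eq_bigr do rewrite -mulrA.
  rewrite sum_delta.
  have -> : \sum_zeta (cls eta)%:R * A eta zeta * (cls zeta)%:R
      = (cls eta)%:R * \sum_(k | src G k == eta) kappa k * (cls (tgt G k))%:R.
    rewrite [in RHS](partition_big (tgt G) predT) //= mulr_sumr.
    apply: eq_bigr => zeta _; rewrite -mulrA /A mulr_suml; congr (_ * _).
    by apply: eq_bigr => k /andP[_ /eqP ->].
  rewrite /X; case: ifP => ce; last by rewrite mul0r mulr0 subrr.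
  rewrite mul1r mulr1 /outr; apply/eqP; rewrite subr_eq0; apply/eqP; apply: eq_bigr => k /eqP sk.
  by rewrite -clsE sk ce mulr1.
have ua : u a 0 = 1 by rewrite mxE /cls connect0.
have u0 : u != 0 by apply/eqP => /matrixP/(_ a 0); rewrite ua mxE => /eqP; rewrite oner_eq0.
have rM : (\rank M < C)%N.
  have := mulmx0_rank_max Mu; have : (\rank u != 0)%N by rewrite mxrank_eq0.
  lia.
have K0 : kermx M != 0.
  by rewrite -mxrank_eq0 mxrank_ker; lia.
have [i Hi] : exists i, row i (kermx M) != 0.
  case: (pickP (fun i => row i (kermx M) != 0)) => [i Hi|none]; first by exists i.
  move: K0; suff -> : kermx M = 0 by rewrite eqxx.
  by apply/row_matrixP => i; rewrite row0; apply/eqP; have := none i => /negbFE.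
set v := row i (kermx M) in Hi.
have vM : v *m M = 0 by rewrite -row_mul mulmx_ker row0.
clearbody v.
have [z vz] : exists z, v 0 z != 0.
  case: (pickP (fun z => v 0 z != 0)) => [z Hz|none]; first by exists z.
  move: Hi; suff -> : v = 0 by rewrite eqxx.
  by apply/rowP => j; apply/eqP; rewrite [X in _ == X]mxE; move: (none j) => /negbFE.
pose vf eta := v 0 eta.
have vE zeta : (v *m M) 0 zeta =
    \sum_(k | tgt G k == zeta) (cls (src G k))%:R * kappa k * vf (src G k)
    - vf zeta * X zeta.
  rewrite !mxE.
  under eq_bigr do rewrite !mxE mulrBr.
  rewrite sumrB.
  under [X in _ - X]eq_bigr do rewrite mulrCA.
  rewrite sum_delta'.
  congr (_ - _).
  rewrite [RHS](partition_big (src G) predT) //=; apply: eq_bigr => eta _.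
  rewrite /A !mulr_sumr; apply: eq_big => [k|k /andP[/eqP sk _]]; first exact: andbC.
  by rewrite sk mulrC.
have vout zeta : ~~ cls zeta -> vf zeta = 0.
  move=> nc; have := vE zeta; rewrite vM mxE /X (negPf nc) mulr1 big1.
    by rewrite sub0r => /eqP; rewrite eq_sym oppr_eq0 => /eqP.
  by move=> k /eqP tk; rewrite clsE tk (negPf nc) !mul0r.
have bv : balanced vf.
  move=> zeta; case: (boolP (cls zeta)) => cz.
    have := vE zeta; rewrite vM mxE /X cz => /eqP; rewrite eq_sym subr_eq0 => /eqP <-.
    rewrite /inflow; apply: eq_bigr => k /eqP tk.
    by rewrite clsE tk cz mul1r.
  rewrite vout // mul0r /inflow big1 // => k /eqP tk.
  by rewrite vout ?mulr0 // clsE tk.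
exists (fun x => `|vf x|); split; first exact: bal_abs.
split => [x|]; first exact: normr_ge0.
have cz : cls z by apply/negPn/negP => nc; move: vz; rewrite -[v 0 z]/(vf z) (vout _ nc) eqxx.
apply: (bal_path (bal_abs bv)) (_ : 0 < `|vf z|).
  by move=> x; exact: normr_ge0.
  by apply: wr_conn => //; rewrite csym.
by rewrite normr_gt0.
Qed.

Lemma kernel_pos : weakly_reversible G ->
  exists b : 'I_C -> R, (forall eta, 0 < b eta) /\ balanced b.
Proof.
move=> wr.
suff [b [bb [b0 bpos]]] : exists b, balanced b /\ (forall x, 0 <= b x) /\
    forall a, a \in enum 'I_C -> 0 < b a.
  by exists b; split => // eta; apply: bpos; rewrite mem_enum.
elim: (enum 'I_C) => [|a s [b [bb [b0 bpos]]]].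
  exists (fun _ => 0); split; last by [].
  by move=> eta; rewrite /inflow big1 ?mul0r // => k _; rewrite mulr0.
have [v [bv [v0 va]]] := per_class wr a.
exists (fun x => v x + b x); split; first exact: bal_add.
split => [x|a']; first by rewrite addr_ge0.
rewrite inE => /orP[/eqP ->|as']; first by rewrite ltr_pwDl.
by rewrite ltr_wpDl // bpos.
Qed.

End Kern.
Lemma natA (a b c l : nat) : (a + b <= c -> l <= b -> a <= c - l)%N.
Proof. lia. Qed.
Lemma natB (x y z : nat) : (x <= y -> x = z -> y <= z -> x = y)%N.
Proof. lia. Qed.
Lemma natC (d i l c : nat) : (i <= l -> l <= i -> d = c - l -> d = c - i)%N.
Proof. lia. Qed.

Section Def0.
Variables (R : realType) (n : nat) (G : crn n).
Variable kappa : 'I_(nrxn G) -> R.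
Hypothesis kpos : positive kappa.
Local Notation C := (ncpx G).
Local Notation E := (rgraph_uedge (G:=G)).
Local Notation L := (n_linkage G).

Lemma def0_cb : weakly_reversible G -> deficiency G R = 0 -> complex_balanced kappa.
Proof.
move=> wr d0.
have [b [bpos bb]] := kernel_pos kpos wr.
pose rv (j : 'I_L) : 'I_C := enum_val j.
pose Ym : 'M[R]_(C, n) := \matrix_(eta, i) (cpx G eta i)%:R.
pose D : 'M[R]_(nrxn G, C) :=
  \matrix_(k, eta) ((eta == tgt G k)%:R - (eta == src G k)%:R).
pose Ind : 'M[R]_(C, L) := \matrix_(eta, j) (connect E (rv j) eta)%:R.
have SD : stoich_dim G R = \rank (D *m Ym).
  rewrite /stoich_dim; congr (\rank _); apply/matrixP => k i; rewrite !mxE.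
  under [RHS]eq_bigr do rewrite !mxE mulrBl.
  by rewrite sumrB !sum_delta'.
have DI : D *m Ind = 0.
  apply/matrixP => k j; rewrite !mxE.
  under eq_bigr do rewrite !mxE mulrBl.
  by rewrite sumrB !sum_delta' cls_edge subrr.
have rI : (L <= \rank Ind)%N.
  have R1 : rowsub rv Ind = 1%:M.
    apply/matrixP => i j; rewrite !mxE.
    case: (eqVneq i j) => [->|ij]; first by rewrite connect0.
    case: (boolP (connect E (rv j) (rv i))) => //= cij.
    have rj := enum_valP j; have ri := enum_valP i.
    rewrite !inE /= ?andbT in rj ri.
    have : fingraph.root (connect E) (rv j) = fingraph.root (connect E) (rv i).
      have hs := sym_connect_sym (@csym n G). apply/(fingraph.rootP hs).
      exact: connect1.
    rewrite (eqP rj) (eqP ri) => /enum_val_inj e.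
    by move: ij; rewrite e eqxx.
  by have := mxrankS (rowsub_sub rv Ind); rewrite R1 mxrank1.
have rS : \rank (D *m Ym) = (C - L)%N.
  move: d0; rewrite /deficiency SD; move: (\rank (D *m Ym)) => s.
  move/eqP; rewrite subr_eq0 subr_eq -PoszD eqz_nat => /eqP h; by rewrite h addnK.
have rD : (\rank D <= C - L)%N by exact: natA (mulmx0_rank_max DI) rI.
have rDY : \rank (D *m Ym) = \rank D by exact: natB (mxrankM_maxl D Ym) rS rD.
have cap0 : ((D :&: kermx Ym)%MS == 0) by apply/mxrank_injP.
have DK : (D <= kermx Ind)%MS by rewrite sub_kermx DI.
have KD : (kermx Ind <= D)%MS.
  rewrite -(mxrank_leqif_sup DK).2 mxrank_ker; apply/eqP.
  by apply: natC (rank_leq_col Ind) rI _; rewrite -rDY.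
pose Acol := row_mx Ym Ind.
have rf : row_free Acol.
  rewrite -kermx_eq0 -submx0.
  have hB : kermx Acol *m Acol = 0 := mulmx_ker Acol.
  move: hB; rewrite mul_mx_row -row_mx0 => /eq_row_mx [h1 h2].
  apply: (submx_trans (_ : _ <= D :&: kermx Ym)%MS); last by rewrite (eqP cap0).
  rewrite sub_capmx; apply/andP; split; last by rewrite sub_kermx h1.
  by apply: submx_trans KD; rewrite sub_kermx h2.
have rfull : row_full Acol^T by rewrite /row_full mxrank_tr.
pose w : 'rV[R]_C := \row_eta ln (b eta).
pose x := w *m pinvmx Acol^T.
have wx : x *m Acol^T = w := mulmxKpV (submx_full w rfull).
pose u := lsubmx x; pose a := rsubmx x.
pose g eta := \sum_j a 0 j * (connect E (rv j) eta)%:R.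
have lnb eta : ln (b eta) = \sum_i u 0 i * (cpx G eta i)%:R + g eta.
  have := congr1 (fun M : 'rV[R]_C => M 0 eta) wx.
  rewrite -(hsubmxK x) tr_row_mx mul_row_col !mxE => <-.
  congr (_ + _); apply: eq_bigr => i _; by rewrite !mxE.
pose c i := expR (u 0 i).
have cpos i : 0 < c i by exact: expR_gt0.
have mon eta : monom c (cpx G eta) = b eta / expR (g eta).
  rewrite /monom.
  under eq_bigr do rewrite /c -expRM_natl.
  rewrite -expR_sum.
  have -> : \sum_i (cpx G eta i)%:R * u 0 i = ln (b eta) - g eta.
    by rewrite lnb addrK; apply: eq_bigr => i _; rewrite mulrC.
  by rewrite expRB lnK // posrE.
have gE k : g (src G k) = g (tgt G k).
  by rewrite /g; apply: eq_bigr => j _; rewrite cls_edge.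
exists c; split => // eta.
under eq_bigr => k /eqP tk do rewrite /srcv mon gE tk mulrA.
rewrite -mulr_suml.
have := bb eta; rewrite /inflow => ->.
rewrite -mulr_suml mon /outr; ring.
Qed.

End Def0.

Theorem lemma4p2 (R : realType) (n : nat) (G : crn n) (m : nat)
    (h : nat -> state n -> {mpoly R[nrxn G]}) :
  weakly_reversible G ->
  (forall l, (m <= l)%N -> irreducible_component G (fun x => Gamma l x)) ->
  (forall kappa : 'I_(nrxn G) -> R, positive kappa ->
     forall l, (m <= l)%N ->
       stationary_on kappa l
         (fun x => (h l x).@[kappa] / sum_Gamma l (fun y => (h l y).@[kappa]))) ->
  [/\ exists kappa : 'I_(nrxn G) -> R, V_cb_pos kappa,
      forall kappa, V_cb_pos kappa -> V_G_pos m h kappa &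
      deficiency G R = 0 ->
        (forall kappa, V_cb_pos kappa <-> V_G_pos m h kappa) /\
        (forall kappa, V_G_pos m h kappa <-> positive kappa)].
Proof.
move=> wr Hirr Hst.
have part2 : forall kappa, V_cb_pos kappa -> V_G_pos m h kappa.
  move=> kappa Hcb; split; last exact: Hcb.1.
  have [c [cpos HC]] := h_prod Hirr Hst Hcb.
  apply: ideal_vanish; exact: gens_vanish HC.
split.
- have k1 : positive (fun _ : 'I_(nrxn G) => 1 : R) by move=> k; exact: ltr01.
  have [b [bpos bb]] := kernel_pos k1 wr.
  exists (fun k => b (src G k)); split; first by move=> k; exact: bpos.
  exists (fun _ => 1); split => [i|eta]; first exact: ltr01.
  have m1 (nu : state n) : monom (fun _ : 'I_n => 1 : R) nu = 1.
    by rewrite /monom; apply: big1 => i _; rewrite expr1n.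
  rewrite /srcv; under eq_bigr do rewrite m1 mulr1.
  under [RHS]eq_bigr do rewrite m1 mulr1.
  have := bb eta; rewrite /inflow /outr => e.
  transitivity (b eta * \sum_(k | src G k == eta) (1:R)).
    by rewrite -e; apply: eq_bigr => k _; rewrite mul1r.
  by rewrite mulr_sumr; apply: eq_bigr => k /eqP <-; rewrite mulr1.
- exact: part2.
- move=> d0.
  have cbpos (kappa : 'I_(nrxn G) -> R) : positive kappa -> V_cb_pos kappa.
    by move=> kp; split => //; exact: (def0_cb kp wr d0).
  split => kappa; split.
  + exact: part2.
  + by move=> [_ kp]; exact: cbpos.
  + by case.
  + by move=> kp; apply/part2/cbpos.
Qed.
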